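(* Let $b\geq 1$ be odd, let $n,k$ be positive integers with $k\leq n-2$, and let $\mathbf{s}=s_1\ldots s_k$ be an integer sequence such that the set $\mathbf{s}\,|\,R_n(b)$ is nonempty. Let $\mathbf{t}$ be the $\prec$-first sequence in $\mathbf{s}\,|\,R_n(b)$, and let $M=\min\{b,\max\{s_i\}_{i=1}^k+1\}$. Then: (1) if $\sum_{i=1}^k s_i$ is odd and $M$ is odd, then $\mathbf{t}=\mathbf{s}M0\ldots0$; (2) if $\sum_{i=1}^k s_i$ is odd and $M$ is even, then $\mathbf{t}=\mathbf{s}M(M+1)0\ldots0$; (3) if $\sum_{i=1}^k s_i$ is even, then $\mathbf{t}=\mathbf{s}0\ldots0$. (In each case the trailing zeros fill the sequence up to length $n$.)
   Context: A restricted growth function of length $n$ is an integer sequence $s_1\ldots s_n$ with $s_1=0$ and $0\leq s_{i+1}\leq \max\{s_j\}_{j=1}^i+1$ for $1\leq i\leq n-1$; $R_n$ is the set of these. For an integer $b\geq1$, $R_n(b)=\{s_1\ldots s_n\in R_n: \max_i s_i\leq b\}$. For a sequence $\mathbf{u}$ and a set $S$ of sequences, $\mathbf{u}\,|\,S$ denotes the subset of $S$ of sequences having prefix $\mathbf{u}$. The Reflected Gray Code Order $\prec$ on length-$n$ sequences of nonnegative integers: $s_1\ldots s_n\prec t_1\ldots t_n$ if, for the smallest $k$ with $s_k\neq t_k$, either $\sum_{i=1}^{k-1}s_i$ is even and $s_k<t_k$, or $\sum_{i=1}^{k-1}s_i$ is odd and $s_k>t_k$. The $\prec$-first sequence of a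 set is its smallest element with respect to $\prec$. *)

(* Defs.v *)
From mathcomp Require Import all_boot.
Set Implicit Arguments. Unset Strict Implicit. Unset Printing Implicit Defensive.

(* Restricted growth functions: s_1 = 0 and s_{i+1} <= max(s_1..s_i) + 1.
   Indices are 0-based here. *)
Definition rgf (s : seq nat) : Prop :=
  (0 < size s -> nth 0 s 0 = 0) /\
  forall i, i.+1 < size s ->
    nth 0 s i.+1 <= (\max_(x <- take i.+1 s) x).+1.

Definition Rnb (n b : nat) (u : seq nat) : Prop :=
  size u = n /\ rgf u /\ all (fun x => x <= b) u.

Definition prefRnb (s : seq nat) (n b : nat) (u : seq nat) : Prop :=
  prefix s u /\ Rnb n b u.

Definition rgc_lt (u v : seq nat) : Prop :=
  size u = size v /\
  exists k, [/\ k < size u, take k u = take k v, nth 0 u k <> nth 0 v k &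
    (if odd (sumn (take k u)) then nth 0 v k < nth 0 u k
     else nth 0 u k < nth 0 v k)].

Definition rgc_first (S : seq nat -> Prop) (t : seq nat) : Prop :=
  S t /\ forall u, S u -> u <> t -> rgc_lt t u.

(* Main.v *)
Require Import Defs.
From mathcomp Require Import all_boot.
From mathcomp Require Import zify.
Set Implicit Arguments.

Lemma first_eq (S : seq nat -> Prop) t c :
  rgc_first S t -> S c -> (forall u, S u -> ~ rgc_lt u c) -> t = c.
Proof.
case=> St H Sc Hc; case: (eqVneq c t) => [-> //|ne].
exfalso; apply: (Hc t St); apply: H => // e; by rewrite e eqxx in ne.
Qed.

Lemma lt_cat (s w d : seq nat) : rgc_lt (s ++ w) (s ++ d) ->
  exists j, [/\ take j w = take j d, nth 0 w j <> nth 0 d j &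
    (if odd (sumn s + sumn (take j d)) then nth 0 d j < nth 0 w j
     else nth 0 w j < nth 0 d j)].
Proof.
case=> _ [k0 [_ Ht Hn Hc]]; move: Ht Hn Hc; rewrite !take_cat !nth_cat.
case: ltnP => h; first by move=> _ [].
move=> /(f_equal (drop (size s))); rewrite !drop_size_cat // => Ht Hn Hc.
exists (k0 - size s); split => //; by rewrite sumn_cat Ht in Hc.
Qed.

Lemma sumn_take_nseq j m : sumn (take j (nseq m 0)) = 0.
Proof. elim: m j => [|m IH] [|j] //=; by rewrite IH. Qed.

Lemma nth_nseq0 j m : nth 0 (nseq m 0) j = 0.
Proof. by rewrite nth_nseq; case: ifP. Qed.

Lemma all_nseq0 b m : all (fun x => x <= b) (nseq m 0).
Proof. by elim: m. Qed.

Lemma u_facts s n b w : prefRnb s n b (s ++ w) -> size s + 2 <= n -> 0 < size s ->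
  nth 0 w 0 <= minn b (\max_(x <- s) x).+1 /\
  nth 0 w 1 <= (maxn (\max_(x <- s) x) (nth 0 w 0)).+1.
Proof.
case=> _ [Hsz [[_ Hr] Hall]] Hn Hs.
have Hw : 2 <= size w by move: Hsz; rewrite size_cat; lia.
case: w Hw Hsz Hr Hall => [|w0 [|w1 w']] //= _ Hsz Hr Hall.
split.
- have := Hr (size s).-1; rewrite prednK // nth_cat ltnn subnn take_size_cat //=.
  move=> H1; have {}H1 := H1 ltac:(rewrite size_cat /=; lia).
  move/all_nthP: Hall => /(_ 0 (size s) ltac:(rewrite size_cat /=; lia)).
  rewrite nth_cat ltnn subnn /= => H2.
  by rewrite leq_min H1 H2.
- have := Hr (size s); rewrite nth_cat take_cat.
  have -> : ((size s).+1 < size s) = false by lia.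
  rewrite subSn // subnn /=.
  rewrite big_cat big_seq1 /= => H; apply: H; rewrite size_cat /=; lia.
Qed.

Lemma membership s n b u d : prefRnb s n b u -> size s + size d = n -> 0 < size s ->
  all (fun x => x <= b) d ->
  (forall j, j < size d -> nth 0 d j <= (\max_(x <- s ++ take j d) x).+1) ->
  prefRnb s n b (s ++ d).
Proof.
case=> /prefixP [w ->] [Hsz [[H0 Hr] Hall]] Hn Hs Hd Hj.
split; first exact: prefix_prefix.
split; first by rewrite size_cat.
split; last by move: Hall; rewrite !all_cat => /andP [-> _].
split.
- move=> _; move: H0; rewrite !nth_cat Hs; apply; rewrite size_cat; lia.
- move=> i Hi; rewrite nth_cat take_cat.
  case: ltnP => h.
  + have := Hr i; rewrite nth_cat take_cat h; apply; rewrite size_cat; lia.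
  + apply: Hj; move: Hi; rewrite size_cat; lia.
Qed.

Theorem proposition2 (b n k : nat) (s t : seq nat) :
  odd b -> 0 < n -> 0 < k -> k + 2 <= n -> size s = k ->
  (exists u, prefRnb s n b u) ->
  rgc_first (prefRnb s n b) t ->
  let M := minn b (\max_(x <- s) x).+1 in
  [/\ (odd (sumn s) -> odd M -> t = s ++ M :: nseq (n - k - 1) 0),
      (odd (sumn s) -> ~~ odd M -> t = s ++ M :: M.+1 :: nseq (n - k - 2) 0) &
      (~~ odd (sumn s) -> t = s ++ nseq (n - k) 0)].
Proof.
move=> Hb Hn Hk Hkn Hs [u0 Hu0] Ht M.
have HMb : M <= b by rewrite geq_minl.
have HMx : M <= (\max_(x <- s) x).+1 by rewrite geq_minr.
split.
- move=> Hos HoM; apply: (first_eq Ht).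
  + apply: (membership _ Hu0); rewrite ?Hs //=.
    * by rewrite size_nseq; lia.
    * by rewrite HMb all_nseq0.
    * move=> [|j] _ /=; first by rewrite cats0.
      by rewrite nth_nseq0.
  + move=> u [/prefixP [w ->] Hu] /lt_cat [j [Htk Hne Hc]].
    have [F1 _] := u_facts _ (conj (prefix_prefix s w) Hu) ltac:(lia) ltac:(lia).
    move: Htk Hne Hc; case: j => [|j] /=.
    * rewrite addn0 Hos => _ _ Hc; move: F1; rewrite -/M; lia.
    * rewrite sumn_take_nseq nth_nseq0 addn0 oddD Hos HoM /= => _ _; lia.
- move=> Hos HoM.
  have HM1 : M = (\max_(x <- s) x).+1.
    move: HoM; rewrite /M /minn; case: ltnP => //; by move=> _; rewrite Hb.
  have HMb' : M.+1 <= b.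
    have : M != b by apply/eqP => e; move: HoM; rewrite e Hb.
    move: HMb; lia.
  apply: (first_eq Ht).
  + apply: (membership _ Hu0); rewrite ?Hs //=.
    * by rewrite size_nseq; lia.
    * by rewrite HMb HMb' all_nseq0.
    * move=> [|[|j]] _ /=; first by rewrite cats0.
      - by rewrite big_cat big_seq1 /= ltnS leq_maxr.
      - by rewrite nth_nseq0.
  + move=> u [/prefixP [w ->] Hu] /lt_cat [j [Htk Hne Hc]].
    have [F1 F2] := u_facts _ (conj (prefix_prefix s w) Hu) ltac:(lia) ltac:(lia).
    move: Htk Hne Hc; case: j => [|[|j]] /=.
    * rewrite addn0 Hos => _ _ Hc; move: F1; rewrite -/M; lia.
    * rewrite addn0 oddD Hos (negbTE HoM) /=.
      case: w {Hu F1} F2 => [|w0 w'] //= F2 [e0] _ Hc.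
      move: F2; rewrite e0 HM1; lia.
    * rewrite sumn_take_nseq nth_nseq0 addn0 !oddD Hos /= (negbTE HoM) /= => _ _; lia.
- move=> Hos; apply: (first_eq Ht).
  + apply: (membership _ Hu0); rewrite ?Hs //=.
    * by rewrite size_nseq; lia.
    * by rewrite all_nseq0.
    * by move=> j _; rewrite nth_nseq0.
  + move=> u [/prefixP [w ->] Hu] /lt_cat [j [Htk Hne Hc]].
    move: Hc; rewrite sumn_take_nseq nth_nseq0 addn0 (negbTE Hos); lia.
Qed.
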